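(* Let $\mathcal{L}$ be a logic, $\mathcal{Q}$ an involution lattice, and $f:\mathcal{L}\to\mathcal{Q}$ an observable. Then for all $A,B\in\mathcal{L}$: (a) $f$ is monotone: $A\le B\Rightarrow f(A)\le f(B)$; (b) if $\mathcal{L}$ is Boolean, then $f(A\vee B)=f(A)\vee f(B)$; (c) $f(A^\perp)\le f(A)^\perp$, and if $\mathcal{Q}$ is a logic then $f(A^\perp)=f(A)^\perp$; (d) if $\mathcal{L}$ is Boolean and $\mathcal{Q}$ is a logic, then $f$ is a logic homomorphism.
   Context: An involution lattice is a $\sigma$-complete bounded lattice (with $0,1$) carrying an order-reversing involution $A\mapsto A^\perp$ ($A^{\perp\perp}=A$, $A\le B\Rightarrow B^\perp\le A^\perp$), not necessarily a complement. A logic is an involution lattice in which $\perp$ is an orthocomplementation ($A\wedge A^\perp=0$, $A\vee A^\perp=1$) and which is orthomodular ($A\le B\Rightarrow B=A\vee(A^\perp\wedge B)$); it is Boolean if moreover distributive. $A,B$ are separated if $A\le B^\perp$; a subset is separated if any two distinct elements are separated. An observable $f:\mathcal{L}\to\mathcal{Q}$ is a map with (i) $f(0)=0$, $f(1)=1$; (ii) $f(\bigvee_{A\in\mathcal{L}_0}A)=\bigvee_{A\in\mathcal{L}_0}f(A)$ for every countable separated $\mathcal{L}_0\subset\mathcal{L}$; (iii) $A\le B^\perp\Rightarrow f(A)\le f(B)^\perp$. A logic homomorphism preserves $0,1$, $\perp$, and binary joins and meets. *)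

(* Defs.v *)
From HB Require Import structures.
From mathcomp Require Import all_boot all_order.
Set Implicit Arguments. Unset Strict Implicit. Unset Printing Implicit Defensive.
Import Order.TTheory.
Local Open Scope order_scope.

Section Defs.
Context {d : Order.disp_t} {T : tbLatticeType d}.

Definition is_lub (S : T -> Prop) (x : T) : Prop :=
  (forall y, S y -> y <= x) /\ (forall z, (forall y, S y -> y <= z) -> x <= z).

Definition countable_set (S : T -> Prop) : Prop :=
  exists g : nat -> T, forall x, S x -> exists n, g n = x.

Definition sigma_complete : Prop :=
  forall S : T -> Prop, countable_set S -> exists x, is_lub S x.

Definition involution_lattice (perp : T -> T) : Prop :=
  [/\ sigma_complete,
      (forall A, perp (perp A) = A) &
      (forall A B, A <= B -> perp B <= perp A)].

Definition is_logic (perp : T -> T) : Prop :=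
  [/\ involution_lattice perp,
      (forall A, A `&` perp A = \bot),
      (forall A, A `|` perp A = \top) &
      (forall A B, A <= B -> B = A `|` (perp A `&` B))].

Definition is_boolean_logic (perp : T -> T) : Prop :=
  is_logic perp /\
  (forall A B C : T, A `&` (B `|` C) = (A `&` B) `|` (A `&` C)).

Definition separated (perp : T -> T) (A B : T) : Prop := A <= perp B.

Definition separated_set (perp : T -> T) (S : T -> Prop) : Prop :=
  forall A B, S A -> S B -> A <> B -> separated perp A B.

End Defs.

Definition observable {dL dQ : Order.disp_t} {L : tbLatticeType dL} {Q : tbLatticeType dQ}
  (perpL : L -> L) (perpQ : Q -> Q) (f : L -> Q) : Prop :=
  [/\ f \bot = \bot /\ f \top = \top,
      (forall (S : L -> Prop) (a : L),
          countable_set S -> separated_set perpL S -> is_lub S a ->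
          is_lub (fun y => exists2 x, S x & f x = y) (f a)) &
      (forall A B, separated perpL A B -> separated perpQ (f A) (f B))].

Definition logic_hom {dL dQ : Order.disp_t} {L : tbLatticeType dL} {Q : tbLatticeType dQ}
  (perpL : L -> L) (perpQ : Q -> Q) (f : L -> Q) : Prop :=
  [/\ f \bot = \bot, f \top = \top,
      (forall A, f (perpL A) = perpQ (f A)),
      (forall A B, f (A `|` B) = f A `|` f B) &
      (forall A B, f (A `&` B) = f A `&` f B)].

(* Main.v *)
Require Import Defs.
From HB Require Import structures.
From mathcomp Require Import all_boot all_order.
Import Order.TTheory.
Local Open Scope order_scope.

Section Aux.
Context {d : Order.disp_t} {T : tbLatticeType d} (perp : T -> T).
Hypothesis pp : forall A, perp (perp A) = A.
Hypothesis anti : forall A B, A <= B -> perp B <= perp A.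

Lemma perp_le A B : A <= perp B -> B <= perp A.
Proof. by move=> /anti; rewrite pp. Qed.

Lemma perpU x y : perp (x `|` y) = perp x `&` perp y.
Proof.
apply/le_anti/andP; split.
  by rewrite lexI; apply/andP; split; apply: anti; rewrite ?leUl ?leUr.
rewrite -[X in X <= _]pp; apply: anti; rewrite leUx.
by apply/andP; split; apply: perp_le; rewrite ?leIl ?leIr.
Qed.

Lemma perpI x y : perp (x `&` y) = perp x `|` perp y.
Proof. by rewrite -[x]pp -[y]pp -perpU !pp. Qed.
End Aux.

Theorem lemma3p2 (dL : Order.disp_t) (L : tbLatticeType dL) (perpL : L -> L)
  (dQ : Order.disp_t) (Q : tbLatticeType dQ) (perpQ : Q -> Q) (f : L -> Q) :
  is_logic perpL -> involution_lattice perpQ -> observable perpL perpQ f ->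
  (forall A B : L, A <= B -> f A <= f B) /\
  (is_boolean_logic perpL -> forall A B : L, f (A `|` B) = f A `|` f B) /\
  (forall A : L, f (perpL A) <= perpQ (f A)) /\
  (is_logic perpQ -> forall A : L, f (perpL A) = perpQ (f A)) /\
  (is_boolean_logic perpL -> is_logic perpQ -> logic_hom perpL perpQ f).
Proof.
move=> [[_ ppL antiL] capL cupL omL] [_ ppQ antiQ] [[f0 f1] fsup fsep].
have two : forall X Y, X <= perpL Y -> f (X `|` Y) = f X `|` f Y.
  move=> X Y XY.
  pose S := fun z => z = X \/ z = Y.
  have cS : countable_set S.
    exists (fun n => if n is 0 then X else Y) => z [->|->]; first by exists 0.
    by exists 1.
  have sS : separated_set perpL S.
    move=> A B [->|->] [->|->] // _; rewrite /separated //.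
    exact: perp_le.
  have lS : is_lub S (X `|` Y).
    split; first by move=> y [->|->]; rewrite ?leUl ?leUr.
    by move=> z H; rewrite leUx !H /S; auto.
  have [H1 H2] := fsup S _ cS sS lS.
  have hX : f X <= f (X `|` Y) by apply: H1; exists X => //; left.
  have hY : f Y <= f (X `|` Y) by apply: H1; exists Y => //; right.
  apply/le_anti/andP; split; last by rewrite leUx hX hY.
  by apply: H2 => y [x [->|->] <-]; rewrite ?leUl ?leUr.
have mono : forall A B : L, A <= B -> f A <= f B.
  move=> A B AB.
  have -> : B = A `|` (perpL A `&` B) by apply: omL.
  rewrite two ?leUl //; apply: perp_le => //; exact: leIl.
have bU : is_boolean_logic perpL -> forall A B : L, f (A `|` B) = f A `|` f B.
  move=> [_ dist] A B.
  have E : A `|` B = A `|` (perpL A `&` (A `|` B)) by apply: omL; rewrite leUl.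
  rewrite E two; last by apply: perp_le => //; exact: leIl.
  apply/le_anti/andP; split.
    rewrite leUx leUl /= (le_trans _ (leUr _ _)) // mono //.
    rewrite dist meetC capL join0x leIr //.
  rewrite -(two A (perpL A `&` (A `|` B))); last by apply: perp_le => //; exact: leIl.
  by rewrite -E leUx !mono ?leUl ?leUr.
have cP : forall A : L, f (perpL A) <= perpQ (f A).
  by move=> A; apply: fsep; rewrite /separated.
have cE : is_logic perpQ -> forall A : L, f (perpL A) = perpQ (f A).
  move=> [_ capQ cupQ omQ] A.
  have T1 : f A `|` f (perpL A) = \top.
    by rewrite -two ?ppL // cupL.
  have ->: perpQ (f A) = f (perpL A) `|` (perpQ (f (perpL A)) `&` perpQ (f A)).
    by apply: omQ.
  rewrite -perpU // [f (perpL A) `|` f A]joinC T1.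
  have -> : perpQ \top = \bot.
    by rewrite -(capQ \top) meet1x.
  by rewrite joinx0.
split=> //; split=> //; split=> //; split=> //.
move=> HB HQ; split=> //.
- exact: cE.
- exact: bU.
- move=> A B.
  rewrite -[A]ppL -[B]ppL -perpU // cE // bU // !cE // perpU // !ppQ //.
Qed.
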